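(* For any $(\boldsymbol{x}^1,\boldsymbol{x}^2),(\boldsymbol{x}^{\star,1},\boldsymbol{x}^{\star,2})\in(\mathbb{T}^3\times\mathbb{T}^3)\setminus\Delta$ there exist $N\in\mathbb{N}$ and $\underline{\omega}^N=(\omega_1,\dots,\omega_N)\in\Omega_0^N$ such that $$f_{\underline{\omega}^N}(\boldsymbol{x}^1)=\boldsymbol{x}^{\star,1}\qquad\text{and}\qquad f_{\underline{\omega}^N}(\boldsymbol{x}^2)=\boldsymbol{x}^{\star,2}.$$
   Context: $\mathbb{T}^3=\mathbb{R}^3/(2\pi\mathbb{Z})^3$ with points $\boldsymbol{x}=(x,y,z)$; $\Delta=\{(\boldsymbol{x}^1,\boldsymbol{x}^2)\in\mathbb{T}^3\times\mathbb{T}^3:\boldsymbol{x}^1=\boldsymbol{x}^2\}$. Fix $U>0$ and let $\Omega_0=[-U,U]^3\times[0,2\pi)^3$, with elements $\omega=(\mathsf{A},\mathsf{B},\mathsf{C},\alpha,\beta,\gamma)$. Define maps of $\mathbb{T}^3$: $f_{(\mathsf{A},\alpha)}(x,y,z)=(x+\mathsf{A}\sin(z+\alpha),\ y+\mathsf{A}\cos(z+\alpha),\ z)$, $f_{(\mathsf{B},\beta)}(x,y,z)=(x,\ y+\mathsf{B}\sin(x+\beta),\ z+\mathsf{B}\cos(x+\beta))$, $f_{(\mathsf{C},\gamma)}(x,y,z)=(x+\mathsf{C}\cos(y+\gamma),\ y,\ z+\mathsf{C}\sin(y+\gamma))$, and $f_\omega=f_{(\mathsf{C},\gamma)}\circ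 f_{(\mathsf{B},\beta)}\circ f_{(\mathsf{A},\alpha)}$. For $\underline{\omega}^N=(\omega_1,\dots,\omega_N)$, $f_{\underline{\omega}^N}=f_{\omega_N}\circ\cdots\circ f_{\omega_1}$. *)

(* Defs.v *)
From Stdlib Require Import Reals List.
Open Scope R_scope.

(* Points of R^3; the torus T^3 = R^3/(2 pi Z)^3 is represented by R^3 with
   equality modulo 2 pi in each coordinate. *)
Definition pt := (R * R * R)%type.

Definition cong2pi (a b : R) : Prop := exists k : Z, a - b = 2 * PI * IZR k.

Definition torus_eq (p q : pt) : Prop :=
  match p, q with
  | (x, y, z), (x', y', z') => cong2pi x x' /\ cong2pi y y' /\ cong2pi z z'
  end.

Record omega := mkOmega { oA : R; oB : R; oC : R; oal : R; obe : R; oga : R }.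

Definition in_Omega0 (U : R) (w : omega) : Prop :=
  -U <= oA w <= U /\ -U <= oB w <= U /\ -U <= oC w <= U /\
  0 <= oal w < 2 * PI /\ 0 <= obe w < 2 * PI /\ 0 <= oga w < 2 * PI.

Definition fA (A al : R) (p : pt) : pt :=
  match p with (x, y, z) => (x + A * sin (z + al), y + A * cos (z + al), z) end.
Definition fB (B be : R) (p : pt) : pt :=
  match p with (x, y, z) => (x, y + B * sin (x + be), z + B * cos (x + be)) end.
Definition fC (C ga : R) (p : pt) : pt :=
  match p with (x, y, z) => (x + C * cos (y + ga), y, z + C * sin (y + ga)) end.

(* f_omega = f_C o f_B o f_A (lifted to R^3; it descends to T^3) *)
Definition f_omega (w : omega) (p : pt) : pt :=
  fC (oC w) (oga w) (fB (oB w) (obe w) (fA (oA w) (oal w) p)).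

(* f_{(w_1,...,w_N)} = f_{w_N} o ... o f_{w_1}: w_1 is applied first *)
Fixpoint f_seq (ws : list omega) (p : pt) : pt :=
  match ws with
  | nil => p
  | w :: ws' => f_seq ws' (f_omega w p)
  end.

(* Main.v *)
Require Import Defs.
From Stdlib Require Import Reals List Lra Lia Classical.
Open Scope R_scope.

Lemma trig_period (k : Z) (x : R) :
  sin (x + 2 * PI * IZR k) = sin x /\ cos (x + 2 * PI * IZR k) = cos x.
Proof.
  assert (Hs : sin (IZR k * PI) = 0) by (apply sin_eq_0_1; eauto).
  replace (2 * PI * IZR k) with (2 * (IZR k * PI)) by ring.
  rewrite sin_plus, cos_plus, sin_2a, cos_2a_sin, Hs. split; ring.
Qed.

Lemma angle_reduce (a : R) : exists a', 0 <= a' < 2 * PI /\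
  forall x, sin (x + a') = sin (x + a) /\ cos (x + a') = cos (x + a).
Proof.
  pose proof PI_RGT_0 as Hpi.
  destruct (archimed (a / (2 * PI))) as [H1 H2].
  set (k := (up (a / (2 * PI)) - 1)%Z).
  assert (Hk : IZR k = IZR (up (a / (2 * PI))) - 1) by (unfold k; rewrite minus_IZR; reflexivity).
  exists (a - 2 * PI * IZR k). split.
  - assert (Hd : a = (a / (2 * PI)) * (2 * PI)) by (field; lra).
    rewrite Hk. split; nra.
  - intro x. replace (x + (a - 2 * PI * IZR k)) with ((x + a) + 2 * PI * IZR (- k))
      by (rewrite opp_IZR; ring).
    apply trig_period.
Qed.

Lemma pt_eq (x y z x' y' z' : R) : x = x' -> y = y' -> z = z' -> ((x, y), z) = ((x', y'), z').
Proof. intros -> -> ->; reflexivity. Qed.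

Definition wA a al := mkOmega a 0 0 al 0 0.
Definition wB b be := mkOmega 0 b 0 0 be 0.
Definition wC c ga := mkOmega 0 0 c 0 0 ga.

Lemma fA0 al p : fA 0 al p = p.
Proof. destruct p as [[x y] z]; unfold fA; apply pt_eq; ring. Qed.
Lemma fB0 al p : fB 0 al p = p.
Proof. destruct p as [[x y] z]; unfold fB; apply pt_eq; ring. Qed.
Lemma fC0 al p : fC 0 al p = p.
Proof. destruct p as [[x y] z]; unfold fC; apply pt_eq; ring. Qed.

Lemma f_wA a al p : f_omega (wA a al) p = fA a al p.
Proof. unfold f_omega, wA; simpl. rewrite fB0, fC0. reflexivity. Qed.
Lemma f_wB a al p : f_omega (wB a al) p = fB a al p.
Proof. unfold f_omega, wB; simpl. rewrite fA0, fC0. reflexivity. Qed.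
Lemma f_wC a al p : f_omega (wC a al) p = fC a al p.
Proof. unfold f_omega, wC; simpl. rewrite fA0, fB0. reflexivity. Qed.

Lemma fA_comp a b al p : fA b al (fA a al p) = fA (a + b) al p.
Proof. destruct p as [[x y] z]; unfold fA; apply pt_eq; ring. Qed.
Lemma fB_comp a b al p : fB b al (fB a al p) = fB (a + b) al p.
Proof. destruct p as [[x y] z]; unfold fB; apply pt_eq; ring. Qed.
Lemma fC_comp a b al p : fC b al (fC a al p) = fC (a + b) al p.
Proof. destruct p as [[x y] z]; unfold fC; apply pt_eq; ring. Qed.

Lemma f_seq_app l1 l2 p : f_seq (l1 ++ l2) p = f_seq l2 (f_seq l1 p).
Proof. revert p; induction l1; intro p; simpl; auto. Qed.

Section WithU.
Variable U : R.
Hypothesis hU : 0 < U.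

Definition good ws := forall w, In w ws -> in_Omega0 U w.

Definition reach (p1 p2 q1 q2 : pt) := exists ws, good ws /\ f_seq ws p1 = q1 /\ f_seq ws p2 = q2.

Lemma reach_refl p1 p2 : reach p1 p2 p1 p2.
Proof. exists nil; split; [intros w []|auto]. Qed.

Lemma reach_trans p1 p2 q1 q2 r1 r2 : reach p1 p2 q1 q2 -> reach q1 q2 r1 r2 -> reach p1 p2 r1 r2.
Proof.
  intros [l1 [G1 [E1 E2]]] [l2 [G2 [E3 E4]]]. exists (l1 ++ l2). split.
  - intros w Hw. apply in_app_or in Hw. destruct Hw; auto.
  - rewrite !f_seq_app, E1, E2. auto.
Qed.

Definition inv_w (w : omega) : list omega :=
  wC (- oC w) (oga w) :: wB (- oB w) (obe w) :: wA (- oA w) (oal w) :: nil.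
Fixpoint inv_l (ws : list omega) : list omega :=
  match ws with nil => nil | w :: ws' => inv_l ws' ++ inv_w w end.

Lemma inv_w_spec w p : f_seq (inv_w w) (f_omega w p) = p.
Proof.
  unfold inv_w; simpl. rewrite f_wA, f_wB, f_wC. unfold f_omega.
  rewrite fC_comp, Rplus_opp_r, fC0, fB_comp, Rplus_opp_r, fB0, fA_comp, Rplus_opp_r, fA0.
  reflexivity.
Qed.

Lemma inv_l_spec ws p : f_seq (inv_l ws) (f_seq ws p) = p.
Proof.
  revert p; induction ws as [|w ws IH]; intro p; simpl; auto.
  rewrite f_seq_app, IH. apply inv_w_spec.
Qed.

Lemma inv_l_good ws : good ws -> good (inv_l ws).
Proof.
  pose proof PI_RGT_0.
  induction ws as [|w ws IH]; intros G; simpl.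
  - intros v [].
  - intros v Hv. apply in_app_or in Hv. destruct Hv as [Hv|Hv].
    + apply IH; auto. intros u Hu; apply G; simpl; auto.
    + assert (Hw : in_Omega0 U w) by (apply G; simpl; auto).
      destruct Hw as (HA & HB & HC & Ha & Hb & Hc).
      simpl in Hv. unfold in_Omega0.
      destruct Hv as [<-|[<-|[<-|[]]]]; simpl; repeat split; lra.
Qed.

Lemma reach_sym p1 p2 q1 q2 : reach p1 p2 q1 q2 -> reach q1 q2 p1 p2.
Proof.
  intros [l [G [E1 E2]]]. exists (inv_l l). split; [apply inv_l_good; auto|].
  rewrite <- E1, <- E2, !inv_l_spec. auto.
Qed.

Lemma nat_bound (K : R) : exists n : nat, (0 < n)%nat /\ Rabs K <= INR n * U.
Proof.
  destruct (INR_archimed U (Rabs K) hU) as [n Hn].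
  exists (S n). split; [lia|]. rewrite S_INR. nra.
Qed.

Lemma gen_A K al : exists ws, good ws /\ forall p, f_seq ws p = fA K al p.
Proof.
  destruct (nat_bound K) as [n [Hn HK]].
  destruct (angle_reduce al) as [al' [Hal Hper]].
  assert (HnR : 0 < INR n) by (apply lt_0_INR; auto).
  exists (repeat (wA (K / INR n) al') n). split.
  - intros w Hw. apply repeat_spec in Hw. subst w. pose proof PI_RGT_0.
    unfold in_Omega0, wA; simpl.
    assert (Rabs (K / INR n) <= U).
    { unfold Rdiv. rewrite Rabs_mult, Rabs_inv, (Rabs_right (INR n)) by lra.
      apply (Rmult_le_reg_r (INR n)); auto. field_simplify; lra. }
    assert (-U <= K / INR n <= U) by (split; [pose proof (Rle_abs (-(K / INR n))); rewrite Rabs_Ropp in *; lra | pose proof (Rle_abs (K / INR n)); lra]). repeat split; lra.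
  - intro p.
    assert (Hg : forall m p, f_seq (repeat (wA (K / INR n) al') m) p = fA (INR m * (K / INR n)) al' p).
    { induction m as [|m IH]; intro q; simpl.
      - rewrite Rmult_0_l, fA0. auto.
      - rewrite IH, f_wA, fA_comp. f_equal. destruct m; simpl; ring. }
    rewrite Hg. replace (INR n * (K / INR n)) with K by (field; lra).
    destruct p as [[x y] z]; unfold fA. destruct (Hper z) as [H1 H2]. rewrite H1, H2. auto.
Qed.

Lemma gen_B K al : exists ws, good ws /\ forall p, f_seq ws p = fB K al p.
Proof.
  destruct (nat_bound K) as [n [Hn HK]].
  destruct (angle_reduce al) as [al' [Hal Hper]].
  assert (HnR : 0 < INR n) by (apply lt_0_INR; auto).
  exists (repeat (wB (K / INR n) al') n). split.
  - intros w Hw. apply repeat_spec in Hw. subst w. pose proof PI_RGT_0.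
    unfold in_Omega0, wB; simpl.
    assert (Rabs (K / INR n) <= U).
    { unfold Rdiv. rewrite Rabs_mult, Rabs_inv, (Rabs_right (INR n)) by lra.
      apply (Rmult_le_reg_r (INR n)); auto. field_simplify; lra. }
    assert (-U <= K / INR n <= U) by (split; [pose proof (Rle_abs (-(K / INR n))); rewrite Rabs_Ropp in *; lra | pose proof (Rle_abs (K / INR n)); lra]). repeat split; lra.
  - intro p.
    assert (Hg : forall m p, f_seq (repeat (wB (K / INR n) al') m) p = fB (INR m * (K / INR n)) al' p).
    { induction m as [|m IH]; intro q; simpl.
      - rewrite Rmult_0_l, fB0. auto.
      - rewrite IH, f_wB, fB_comp. f_equal. destruct m; simpl; ring. }
    rewrite Hg. replace (INR n * (K / INR n)) with K by (field; lra).
    destruct p as [[x y] z]; unfold fB. destruct (Hper x) as [H1 H2]. rewrite H1, H2. auto.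
Qed.

Lemma gen_C K al : exists ws, good ws /\ forall p, f_seq ws p = fC K al p.
Proof.
  destruct (nat_bound K) as [n [Hn HK]].
  destruct (angle_reduce al) as [al' [Hal Hper]].
  assert (HnR : 0 < INR n) by (apply lt_0_INR; auto).
  exists (repeat (wC (K / INR n) al') n). split.
  - intros w Hw. apply repeat_spec in Hw. subst w. pose proof PI_RGT_0.
    unfold in_Omega0, wC; simpl.
    assert (Rabs (K / INR n) <= U).
    { unfold Rdiv. rewrite Rabs_mult, Rabs_inv, (Rabs_right (INR n)) by lra.
      apply (Rmult_le_reg_r (INR n)); auto. field_simplify; lra. }
    assert (-U <= K / INR n <= U) by (split; [pose proof (Rle_abs (-(K / INR n))); rewrite Rabs_Ropp in *; lra | pose proof (Rle_abs (K / INR n)); lra]). repeat split; lra.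
  - intro p.
    assert (Hg : forall m p, f_seq (repeat (wC (K / INR n) al') m) p = fC (INR m * (K / INR n)) al' p).
    { induction m as [|m IH]; intro q; simpl.
      - rewrite Rmult_0_l, fC0. auto.
      - rewrite IH, f_wC, fC_comp. f_equal. destruct m; simpl; ring. }
    rewrite Hg. replace (INR n * (K / INR n)) with K by (field; lra).
    destruct p as [[x y] z]; unfold fC. destruct (Hper y) as [H1 H2]. rewrite H1, H2. auto.
Qed.

Lemma reach_A K al p1 p2 : reach p1 p2 (fA K al p1) (fA K al p2).
Proof. destruct (gen_A K al) as [l [G E]]. exists l; auto. Qed.
Lemma reach_B K al p1 p2 : reach p1 p2 (fB K al p1) (fB K al p2).
Proof. destruct (gen_B K al) as [l [G E]]. exists l; auto. Qed.
Lemma reach_C K al p1 p2 : reach p1 p2 (fC K al p1) (fC K al p2).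
Proof. destruct (gen_C K al) as [l [G E]]. exists l; auto. Qed.

End WithU.

Lemma trig_i u1 u2 d : sin ((u2 - u1) / 2) <> 0 -> exists K al,
  sin (u2 + al) = sin (u1 + al) /\ K * cos (u2 + al) - K * cos (u1 + al) = d.
Proof.
  intro Hs. set (e := (u2 - u1) / 2).
  exists (- d / (2 * sin e)), (PI / 2 - (u1 + u2) / 2).
  replace (u1 + (PI / 2 - (u1 + u2) / 2)) with (PI / 2 - e) by (unfold e; field).
  replace (u2 + (PI / 2 - (u1 + u2) / 2)) with (PI / 2 - - e) by (unfold e; field).
  rewrite !sin_shift, !cos_shift, cos_neg, sin_neg. split; [reflexivity|]. field; auto.
Qed.

Lemma trig_ii u1 u2 d : sin ((u2 - u1) / 2) <> 0 -> exists K al,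
  cos (u2 + al) = cos (u1 + al) /\ K * sin (u2 + al) - K * sin (u1 + al) = d.
Proof.
  intro Hs. set (e := (u2 - u1) / 2).
  exists (d / (2 * sin e)), (- ((u1 + u2) / 2)).
  replace (u1 + - ((u1 + u2) / 2)) with (- e) by (unfold e; field).
  replace (u2 + - ((u1 + u2) / 2)) with e by (unfold e; field).
  rewrite cos_neg, sin_neg. split; [reflexivity|]. field; auto.
Qed.

Definition px (p : pt) := fst (fst p).
Definition py (p : pt) := snd (fst p).
Definition pz (p : pt) := snd p.

Section S.
Variable U : R.
Hypothesis hU : 0 < U.

Lemma stepA_y p1 p2 t : sin ((pz p2 - pz p1) / 2) <> 0 -> exists q1 q2, reach U p1 p2 q1 q2 /\
  px q2 - px q1 = px p2 - px p1 /\ py q2 - py q1 = t /\ pz q2 - pz q1 = pz p2 - pz p1.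
Proof.
  destruct p1 as [[x1 y1] z1], p2 as [[x2 y2] z2]; unfold px, py, pz; simpl. intro Hs.
  destruct (trig_i z1 z2 (t - (y2 - y1)) Hs) as [K [al [H1 H2]]].
  exists (fA K al (x1, y1, z1)), (fA K al (x2, y2, z2)). split; [apply reach_A; auto|].
  simpl. rewrite H1. repeat split; lra.
Qed.

Lemma stepB_y p1 p2 t : sin ((px p2 - px p1) / 2) <> 0 -> exists q1 q2, reach U p1 p2 q1 q2 /\
  px q2 - px q1 = px p2 - px p1 /\ py q2 - py q1 = t /\ pz q2 - pz q1 = pz p2 - pz p1.
Proof.
  destruct p1 as [[x1 y1] z1], p2 as [[x2 y2] z2]; unfold px, py, pz; simpl. intro Hs.
  destruct (trig_ii x1 x2 (t - (y2 - y1)) Hs) as [K [al [H1 H2]]].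
  exists (fB K al (x1, y1, z1)), (fB K al (x2, y2, z2)). split; [apply reach_B; auto|].
  simpl. rewrite H1. repeat split; lra.
Qed.

Lemma stepC_x p1 p2 t : sin ((py p2 - py p1) / 2) <> 0 -> exists q1 q2, reach U p1 p2 q1 q2 /\
  px q2 - px q1 = t /\ py q2 - py q1 = py p2 - py p1 /\ pz q2 - pz q1 = pz p2 - pz p1.
Proof.
  destruct p1 as [[x1 y1] z1], p2 as [[x2 y2] z2]; unfold px, py, pz; simpl. intro Hs.
  destruct (trig_i y1 y2 (t - (x2 - x1)) Hs) as [K [al [H1 H2]]].
  exists (fC K al (x1, y1, z1)), (fC K al (x2, y2, z2)). split; [apply reach_C; auto|].
  simpl. rewrite H1. repeat split; lra.
Qed.

Lemma stepC_z p1 p2 t : sin ((py p2 - py p1) / 2) <> 0 -> exists q1 q2, reach U p1 p2 q1 q2 /\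
  px q2 - px q1 = px p2 - px p1 /\ py q2 - py q1 = py p2 - py p1 /\ pz q2 - pz q1 = t.
Proof.
  destruct p1 as [[x1 y1] z1], p2 as [[x2 y2] z2]; unfold px, py, pz; simpl. intro Hs.
  destruct (trig_ii y1 y2 (t - (z2 - z1)) Hs) as [K [al [H1 H2]]].
  exists (fC K al (x1, y1, z1)), (fC K al (x2, y2, z2)). split; [apply reach_C; auto|].
  simpl. rewrite H1. repeat split; lra.
Qed.

Lemma noncong_sin a b : ~ cong2pi a b -> sin ((b - a) / 2) <> 0.
Proof.
  intros Hn H0. apply sin_eq_0_0 in H0 as [k Hk]. apply Hn. exists (- k)%Z.
  rewrite opp_IZR. lra.
Qed.

Lemma sinPI2 : sin (PI / 2) <> 0.
Proof. rewrite sin_PI2; lra. Qed.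

Definition c1 : pt := (0, 0, 0).
Definition c2 : pt := (0, PI, 0).

Lemma translate p1 p2 : px p2 - px p1 = 0 -> py p2 - py p1 = PI -> pz p2 - pz p1 = 0 ->
  reach U p1 p2 c1 c2.
Proof.
  destruct p1 as [[x1 y1] z1], p2 as [[x2 y2] z2]; unfold px, py, pz; simpl. intros Hx Hy Hz.
  replace x2 with x1 by lra. replace z2 with z1 by lra. replace y2 with (y1 + PI) by lra.
  eapply reach_trans; [apply (reach_A U hU (- x1) (PI / 2 - z1))|].
  unfold fA. replace (z1 + (PI / 2 - z1)) with (PI / 2) by ring. rewrite sin_PI2, cos_PI2.
  eapply reach_trans; [apply (reach_A U hU (- y1) (- z1))|].
  unfold fA. replace (z1 + - z1) with 0 by ring. rewrite sin_0, cos_0.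
  eapply reach_trans; [apply (reach_B U hU (- z1) 0)|].
  unfold fB. replace (x1 + - x1 * 1 + - y1 * 0 + 0) with 0 by ring. rewrite sin_0, cos_0.
  match goal with |- reach _ ?a ?b _ _ => assert (Ea : a = c1) by (unfold c1; apply pt_eq; ring);
    assert (Eb : b = c2) by (unfold c2; apply pt_eq; ring) end.
  rewrite Ea, Eb.
  apply reach_refl.
Qed.

Lemma canon p1 p2 : ~ torus_eq p1 p2 -> reach U p1 p2 c1 c2.
Proof.
  intro Hn.
  assert (S1 : exists q1 q2, reach U p1 p2 q1 q2 /\ sin ((py q2 - py q1) / 2) <> 0).
  { destruct p1 as [[x1 y1] z1], p2 as [[x2 y2] z2]. simpl in Hn.
    destruct (classic (cong2pi y1 y2)) as [Cy|Cy].
    2:{ exists (x1, y1, z1), (x2, y2, z2). split; [apply reach_refl|]. apply noncong_sin; auto. }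
    destruct (classic (cong2pi x1 x2)) as [Cx|Cx].
    - destruct (classic (cong2pi z1 z2)) as [Cz|Cz]; [tauto|].
      destruct (stepA_y (x1, y1, z1) (x2, y2, z2) PI) as [q1 [q2 [R [_ [E _]]]]].
      { apply noncong_sin; auto. }
      exists q1, q2; split; auto. rewrite E; apply sinPI2.
    - destruct (stepB_y (x1, y1, z1) (x2, y2, z2) PI) as [q1 [q2 [R [_ [E _]]]]].
      { apply noncong_sin; auto. }
      exists q1, q2; split; auto. rewrite E; apply sinPI2. }
  destruct S1 as [q1 [q2 [R1 Hq]]].
  destruct (stepC_x q1 q2 PI Hq) as [r1 [r2 [R2 [Ex [Ey Ez]]]]].
  destruct (stepB_y r1 r2 PI) as [s1 [s2 [R3 [Ex' [Ey' Ez']]]]]. { rewrite Ex; apply sinPI2. }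
  destruct (stepC_x s1 s2 0) as [t1 [t2 [R4 [Ex'' [Ey'' Ez'']]]]]. { rewrite Ey'; apply sinPI2. }
  destruct (stepC_z t1 t2 0) as [u1 [u2 [R5 [Ex3 [Ey3 Ez3]]]]]. { rewrite Ey'', Ey'; apply sinPI2. }
  eapply reach_trans; [exact R1|]. eapply reach_trans; [exact R2|].
  eapply reach_trans; [exact R3|]. eapply reach_trans; [exact R4|].
  eapply reach_trans; [exact R5|]. apply translate; lra.
Qed.

End S.

Theorem proposition3p6 (U : R) (hU : 0 < U) (x1 x2 y1 y2 : pt) :
  ~ torus_eq x1 x2 -> ~ torus_eq y1 y2 ->
  exists ws : list omega,
    (forall w, In w ws -> in_Omega0 U w) /\
    torus_eq (f_seq ws x1) y1 /\ torus_eq (f_seq ws x2) y2.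
Proof.
  intros H1 H2.
  assert (R : reach U x1 x2 y1 y2).
  { eapply reach_trans; [apply (canon U hU x1 x2 H1)|]. eapply reach_sym; [exact hU | apply (canon U hU y1 y2 H2)]. }
  destruct R as [ws [G [E1 E2]]].
  exists ws. split; [exact G|]. rewrite E1, E2.
  assert (Hr : forall p, torus_eq p p).
  { intros [[a b] c]. simpl. assert (cong2pi a a /\ cong2pi b b /\ cong2pi c c) as H; [|exact H].
    repeat split; exists 0%Z; simpl; ring. }
  split; apply Hr.
Qed.
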